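(* Let $s_n$ ($n\ge1$) be the number of saturated secondary structures on $[1,n]$ and $S(z)=\sum_{n\ge1}s_nz^n$. Then $S(z)$ satisfies the algebraic equation $$-S^3z^4+z(1+z)-S^2z^2(z^2-2)+S(z^2-1)=0 .$$
   Context: A secondary structure on $[1,n]$ (with minimum hairpin size $\theta=1$) is a set $S$ of pairs $(i,j)$ of integers with $1\le i<j\le n$ such that: (i) there are no $(i,j),(k,\ell)\in S$ with $i<k<j<\ell$; (ii) every position of $[1,n]$ belongs to at most one pair of $S$; (iii) $j-i>1$ for every $(i,j)\in S$. Any position may pair with any other. A secondary structure $S$ on $[1,n]$ is saturated if there is no pair $(i,j)\notin S$ with $1\le i<j\le n$ such that $S\cup\{(i,j)\}$ is again a secondary structure on $[1,n]$. *)

(* Defs.v *)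
From HB Require Import structures.
From mathcomp Require Import all_boot all_order all_algebra.
Set Implicit Arguments. Unset Strict Implicit. Unset Printing Implicit Defensive.
Import GRing.Theory.

(* Positions of [1,n] are represented by 'I_n.+1 (values 0..n); a pair
   (i,j) must satisfy 1 <= i < j (and j <= n is automatic). *)
Definition pos_pair (n : nat) (p : 'I_n.+1 * 'I_n.+1) : bool :=
  (1 <= p.1)%N && (p.1 < p.2)%N.

(* secondary structure on [1,n] with minimum hairpin size theta = 1 *)
Definition secondary (n : nat) (S : {set 'I_n.+1 * 'I_n.+1}) : bool :=
  [&& [forall p in S, pos_pair p],
      [forall p in S, forall q in S,
         ~~ [&& (p.1 < q.1)%N, (q.1 < p.2)%N & (p.2 < q.2)%N]],
      [forall p in S, forall q in S,
         (p != q) ==> [&& p.1 != q.1, p.1 != q.2, p.2 != q.1 & p.2 != q.2]] &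
      [forall p in S, (1 < p.2 - p.1)%N]].

Definition saturated (n : nat) (S : {set 'I_n.+1 * 'I_n.+1}) : bool :=
  secondary S &&
  [forall p, ((p \notin S) && pos_pair p) ==> ~~ secondary (p |: S)].

Definition sat_count (n : nat) : nat :=
  #|[set S : {set 'I_n.+1 * 'I_n.+1} | saturated S]|.

Definition S_trunc (N : nat) : {poly int} :=
  (\sum_(1 <= n < N.+1) (sat_count n)%:R *: 'X^n)%R.

Definition alg_lhs (P : {poly int}) : {poly int} :=
  (- P ^+ 3 * 'X^4 + 'X * (1 + 'X) - P ^+ 2 * 'X^2 * ('X^2 - 2%:R)
   + P * ('X^2 - 1))%R.

(* Main.v *)
From HB Require Import structures.
From mathcomp Require Import all_boot all_order all_algebra.
Require Import Defs.
From Stdlib Require Import Lia ZArith ClassicalEpsilon Ring.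
Set Implicit Arguments. Unset Strict Implicit. Unset Printing Implicit Defensive.

Definition asB (P : Prop) : bool :=
  if excluded_middle_informative P then true else false.
Lemma asBP (P : Prop) : asB P = true <-> P.
Proof. rewrite /asB; case: excluded_middle_informative => //; split => //. Qed.

#[global] Instance Op_addn : ZifyClasses.BinOp addn.
Proof. refine {| ZifyClasses.TBOp := Z.add |}; move=> x y; exact: Nat2Z.inj_add. Defined.
Add Zify BinOp Op_addn.
#[global] Instance Op_subn : ZifyClasses.BinOp subn.
Proof. refine {| ZifyClasses.TBOp := fun x y => Z.max 0 (x - y) |}; move=> x y; exact: Nat2Z.inj_sub_max. Defined.
Add Zify BinOp Op_subn.
Ltac nl := lia.

Section Comb.
Variable n : nat.
Local Notation T := ('I_n.+1 * 'I_n.+1)%type.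
Implicit Types (S : {set T}) (p q : T).

Definition inR a l p : Prop :=
  (a <= p.1 /\ p.1 + 1 < p.2 /\ p.2 < a + l)%coq_nat.
Definition cross p q : Prop := (p.1 < q.1 /\ q.1 < p.2 /\ p.2 < q.2)%coq_nat.
Definition secP a l S : Prop :=
  (forall p, p \in S -> inR a l p) /\
  (forall p q, p \in S -> q \in S -> ~ cross p q) /\
  (forall p q, p \in S -> q \in S -> p <> q ->
     (p.1 <> q.1 :> nat) /\ (p.1 <> q.2 :> nat) /\ (p.2 <> q.1 :> nat) /\ (p.2 <> q.2 :> nat)).
Definition paired S (x : nat) : Prop :=
  exists p, p \in S /\ (p.1 = x :> nat \/ p.2 = x :> nat).
Definition addable a l S p : Prop :=
  inR a l p /\ ~ paired S p.1 /\ ~ paired S p.2 /\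
  (forall q, q \in S -> ~ cross q p /\ ~ cross p q).
Definition satP a l S : Prop := secP a l S /\ forall p, ~ addable a l S p.
Definition covered S (x : nat) : Prop :=
  exists p, p \in S /\ (p.1 <= x /\ x <= p.2)%coq_nat.
Definition Acond a l S : Prop :=
  satP a l S /\ forall x, (a <= x)%coq_nat -> (x < a + l)%coq_nat -> covered S x.

Lemma addable_sec a l S p : secP a l S ->
  (p \notin S /\ secP a l (p |: S)) <-> addable a l S p.
Proof.
move=> [hin [hnc hd]]; split.
- move=> [pS [hin' [hnc' hd']]].
  have pP : p \in p |: S by rewrite setU11.
  have qP : forall q, q \in S -> q \in p |: S by move=> q qS; rewrite setU1r.
  have neq : forall q, q \in S -> p <> q by move=> q qS E; rewrite E qS in pS.
  split; first exact: hin'.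
  split; first by move=> [q [qS Hq]]; have := hd' _ _ pP (qP _ qS) (neq _ qS); nl.
  split; first by move=> [q [qS Hq]]; have := hd' _ _ pP (qP _ qS) (neq _ qS); nl.
  by move=> q qS; split; [apply: hnc' (qP _ qS) pP | apply: hnc' pP (qP _ qS)].
- move=> [hp [np1 [np2 hc]]].
  have pS : p \notin S.
    by apply/negP => pS; apply: np1; exists p; split => //; left.
  split => //; split; last split.
  + by move=> q; rewrite in_setU1 => /orP [/eqP -> //| /hin].
  + move=> q r; rewrite !in_setU1 => /orP [/eqP ->|qS] /orP [/eqP ->|rS].
    * rewrite /cross; nl.
    * by case: (hc _ rS).
    * by case: (hc _ qS).
    * exact: hnc.
  + move=> q r; rewrite !in_setU1 => /orP [/eqP ->|qS] /orP [/eqP ->|rS] //.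
    * move=> _; split; first by move=> E; apply: np1; exists r; split => //; left.
      split; first by move=> E; apply: np1; exists r; split => //; right.
      split; first by move=> E; apply: np2; exists r; split => //; left.
      by move=> E; apply: np2; exists r; split => //; right.
    * move=> _; split; first by move=> E; apply: np1; exists q; split => //; left.
      split; first by move=> E; apply: np2; exists q; split => //; left.
      split; first by move=> E; apply: np1; exists q; split => //; right.
      by move=> E; apply: np2; exists q; split => //; right.
    * exact: hd.
Qed.


Lemma memU p S1 S2 q : (q \in p |: (S1 :|: S2)) = (q == p) || (q \in S1) || (q \in S2).
Proof. by rewrite !inE orbA. Qed.

Section Split.
Variables (a l j : nat) (pr : T).
Hypotheses (hp1 : pr.1 = a :> nat) (hp2 : pr.2 = a + j + 1 :> nat)
  (hj1 : (1 <= j)%coq_nat) (hjl : (j + 2 <= l)%coq_nat).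

Lemma split_mem S : secP a l S -> pr \in S -> forall q, q \in S ->
  q = pr \/ inR (a+1) j q \/ inR (a + j + 2) (l - 2 - j) q.
Proof.
move=> [hin [hnc hd]] prS q qS.
case: (eqVneq q pr) => [->|ne]; first by left.
right; have := hin _ qS; have := hnc _ _ prS qS; have := hd _ _ prS qS.
have ne' : pr <> q by move=> E; rewrite E eqxx in ne.
move/(_ ne'); rewrite /inR /cross hp1 hp2; nl.
Qed.

Variables (S1 S2 : {set T}).
Hypotheses (h1 : forall q, q \in S1 -> inR (a+1) j q)
           (h2 : forall q, q \in S2 -> inR (a + j + 2) (l - 2 - j) q).

Lemma union_sat :
  satP a l (pr |: (S1 :|: S2)) <-> satP (a+1) j S1 /\ satP (a + j + 2) (l - 2 - j) S2.
Proof.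
set S := pr |: _.
have pS : pr \in S by rewrite setU11.
have s1S : forall q, q \in S1 -> q \in S by move=> q qS; rewrite memU qS orbT.
have s2S : forall q, q \in S2 -> q \in S by move=> q qS; rewrite memU qS !orbT.
split.
- move=> [[hin [hnc hd]] hsat].
  have sub : forall a' l' (X : {set T}), (forall q, q \in X -> inR a' l' q) ->
     (forall q, q \in X -> q \in S) -> secP a' l' X.
    move=> a' l' X hX hXS; split => //; split.
      by move=> p q /hXS pS' /hXS qS'; apply: hnc.
    by move=> p q /hXS pS' /hXS qS'; apply: hd.
  split; split.
  + exact: sub.
  + move=> p [hpin [np1 [np2 hc]]]; apply: (hsat p).
    move: hpin; rewrite /inR => hpin.
    split; first by rewrite /inR; nl.
    split.
      move=> [q [/[dup] qS]]; rewrite memU => /orP[/orP[/eqP->|qS1]|qS2].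
      * rewrite hp1 hp2; nl.
      * by move=> hq; apply: np1; exists q.
      * have := h2 qS2; rewrite /inR; nl.
    split.
      move=> [q [/[dup] qS]]; rewrite memU => /orP[/orP[/eqP->|qS1]|qS2].
      * rewrite hp1 hp2; nl.
      * by move=> hq; apply: np2; exists q.
      * have := h2 qS2; rewrite /inR; nl.
    move=> q; rewrite memU => /orP[/orP[/eqP->|qS1]|qS2].
    * rewrite /cross hp1 hp2; nl.
    * exact: hc.
    * have := h2 qS2; rewrite /inR /cross; nl.
  + exact: sub.
  + move=> p [hpin [np1 [np2 hc]]]; apply: (hsat p).
    move: hpin; rewrite /inR => hpin.
    split; first by rewrite /inR; nl.
    split.
      move=> [q [/[dup] qS]]; rewrite memU => /orP[/orP[/eqP->|qS1]|qS2].
      * rewrite hp1 hp2; nl.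
      * have := h1 qS1; rewrite /inR; nl.
      * by move=> hq; apply: np1; exists q.
    split.
      move=> [q [/[dup] qS]]; rewrite memU => /orP[/orP[/eqP->|qS1]|qS2].
      * rewrite hp1 hp2; nl.
      * have := h1 qS1; rewrite /inR; nl.
      * by move=> hq; apply: np2; exists q.
    move=> q; rewrite memU => /orP[/orP[/eqP->|qS1]|qS2].
    * rewrite /cross hp1 hp2; nl.
    * have := h1 qS1; rewrite /inR /cross; nl.
    * exact: hc.
- move=> [[[hin1 [hnc1 hd1]] hs1] [[hin2 [hnc2 hd2]] hs2]].
  split.
    split.
      move=> q; rewrite memU => /orP[/orP[/eqP->|qS1]|qS2].
      * rewrite /inR hp1 hp2; nl.
      * have := h1 qS1; rewrite /inR; nl.
      * have := h2 qS2; rewrite /inR; nl.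
    split.
      move=> p q; rewrite !memU => /orP[/orP[/eqP->|pS1]|pS2] /orP[/orP[/eqP->|qS1]|qS2];
        rewrite /cross ?hp1 ?hp2;
        try (have := h1 pS1); try (have := h1 qS1); try (have := h2 pS2); try (have := h2 qS2);
        rewrite /inR; try nl.
      * by move=> _ _; apply: hnc1.
      * by move=> _ _; apply: hnc2.
    move=> p q; rewrite !memU => /orP[/orP[/eqP->|pS1]|pS2] /orP[/orP[/eqP->|qS1]|qS2];
        rewrite ?hp1 ?hp2;
        try (have := h1 pS1); try (have := h1 qS1); try (have := h2 pS2); try (have := h2 qS2);
        rewrite /inR; try nl.
    * by [].
    * by move=> _ _; apply: hd1.
    * by move=> _ _; apply: hd2.
  move=> p [hpin [np1 [np2 hc]]].
  have hpr := hc _ pS.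
  move: hpin; rewrite /inR => hpin.
  have [lt1|ge1] := Nat.lt_ge_cases p.1 (a + j + 2).
  + have hp1a : (a + 1 <= p.1)%coq_nat.
      have : p.1 <> a :> nat by move=> E; apply: np1; exists pr; split => //; left; rewrite hp1 E.
      nl.
    have hp1b : (p.1 <= a + j)%coq_nat.
      have : p.1 <> a + j + 1 :> nat by move=> E; apply: np1; exists pr; split => //; right; rewrite hp2 E.
      nl.
    have hp2b : (p.2 <= a + j)%coq_nat.
      have : p.2 <> a + j + 1 :> nat by move=> E; apply: np2; exists pr; split => //; right; rewrite hp2 E.
      move: hpr; rewrite /cross hp1 hp2; nl.
    apply: (hs1 p); split; first by rewrite /inR; nl.
    split; first by move=> [q [qS hq]]; apply: np1; exists q; split => //; apply: s1S.
    split; first by move=> [q [qS hq]]; apply: np2; exists q; split => //; apply: s1S.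
    by move=> q qS; apply: hc; apply: s1S.
  + apply: (hs2 p); split; first by rewrite /inR; nl.
    split; first by move=> [q [qS hq]]; apply: np1; exists q; split => //; apply: s2S.
    split; first by move=> [q [qS hq]]; apply: np2; exists q; split => //; apply: s2S.
    by move=> q qS; apply: hc; apply: s2S.
Qed.


Lemma covered_union :
  (forall x, (a <= x)%coq_nat -> (x < a + l)%coq_nat -> covered (pr |: (S1 :|: S2)) x) <->
  (forall x, (a + j + 2 <= x)%coq_nat -> (x < a + j + 2 + (l - 2 - j))%coq_nat -> covered S2 x).
Proof.
split.
- move=> hc x hx1 hx2; have [q [qS hq]] := hc x ltac:(nl) ltac:(nl).
  move: qS; rewrite memU => /orP[/orP[/eqP E|qS1]|qS2].
  + move: hq; rewrite E hp2; nl.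
  + have := h1 qS1; rewrite /inR; nl.
  + by exists q.
- move=> hc x hx1 hx2.
  have [lt1|ge1] := Nat.lt_ge_cases x (a + j + 2).
  + exists pr; split; first by rewrite setU11.
    rewrite hp1 hp2; nl.
  + have [q [qS hq]] := hc x ge1 ltac:(nl).
    by exists q; split => //; rewrite memU qS !orbT.
Qed.

Lemma union_A :
  Acond a l (pr |: (S1 :|: S2)) <-> satP (a+1) j S1 /\ Acond (a + j + 2) (l - 2 - j) S2.
Proof.
rewrite /Acond union_sat covered_union; split.
- by move=> [[? ?] ?].
- by move=> [? [? ?]].
Qed.

End Split.

Definition Rs a l : {set T} := [set q | asB (inR a l q)].

Lemma decomp a l j (pr : T) S : pr.1 = a :> nat -> pr.2 = a + j + 1 :> nat ->
  (1 <= j)%coq_nat -> (j + 2 <= l)%coq_nat -> secP a l S -> pr \in S ->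
  S = pr |: ((S :&: Rs (a+1) j) :|: (S :&: Rs (a + j + 2) (l - 2 - j))).
Proof.
move=> hp1 hp2 hj hjl hs prS; apply/setP => q; rewrite memU !inE.
case: (boolP (q \in S)) => qS /=.
- have [->|[H|H]] := split_mem hp1 hp2 hj hjl hs prS qS.
  + by rewrite eqxx.
  + have -> : asB (inR (a+1) j q) by apply/asBP.
    by rewrite orbT.
  + have -> : asB (inR (a+j+2) (l-2-j) q) by apply/asBP.
    by rewrite !orbT.
- rewrite !orbF; apply/esym; apply: negbTE; apply/eqP => E; by rewrite E prS in qS.
Qed.

Lemma restrict1 a l j (pr : T) (S1 S2 : {set T}) : pr.1 = a :> nat -> pr.2 = a + j + 1 :> nat ->
  (j + 2 <= l)%coq_nat ->
  (forall q, q \in S1 -> inR (a+1) j q) ->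
  (forall q, q \in S2 -> inR (a + j + 2) (l - 2 - j) q) ->
  (pr |: (S1 :|: S2)) :&: Rs (a+1) j = S1 /\
  (pr |: (S1 :|: S2)) :&: Rs (a+j+2) (l-2-j) = S2.
Proof.
move=> hp1 hp2 hjl h1 h2; split; apply/setP => q; rewrite inE memU !inE.
- case: (boolP (q \in S1)) => qS1.
  + by rewrite orbT /=; apply/asBP; apply: h1.
  + rewrite orbF; apply/negbTE/negP => /andP[/orP[/eqP E|qS2] /asBP hq].
    * move: hq; rewrite /inR E hp1; nl.
    * have := h2 _ qS2; move: hq; rewrite /inR; nl.
- case: (boolP (q \in S2)) => qS2.
  + by rewrite orbT /=; apply/asBP; apply: h2.
  + rewrite orbF; apply/negbTE/negP => /andP[/orP[/eqP E|qS1] /asBP hq].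
    * move: hq; rewrite /inR E hp1; nl.
    * have := h1 _ qS1; move: hq; rewrite /inR; nl.
Qed.

Definition count (Q : {set T} -> Prop) := #|[set S : {set T} | asB (Q S)]|.

Lemma count_split a l j (pr : T) (G F : {set T} -> Prop) :
  pr.1 = a :> nat -> pr.2 = a + j + 1 :> nat ->
  (1 <= j)%coq_nat -> (j + 2 <= l)%coq_nat ->
  (forall S1 S2, (forall q, q \in S1 -> inR (a+1) j q) ->
     (forall q, q \in S2 -> inR (a + j + 2) (l - 2 - j) q) ->
     (G (pr |: (S1 :|: S2)) <-> satP (a+1) j S1 /\ F S2)) ->
  (forall S, G S -> secP a l S) ->
  (forall S2, F S2 -> forall q, q \in S2 -> inR (a + j + 2) (l - 2 - j) q) ->
  count (fun S => G S /\ pr \in S) = count (satP (a+1) j) * count F.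
Proof.
move=> hp1 hp2 hj hjl hGF hG hF.
rewrite /count -cardsX.
set A := [set S1 | asB (satP (a+1) j S1)].
set B := [set S2 | asB (F S2)].
set f := fun x : {set T} * {set T} => pr |: (x.1 :|: x.2).
have hA : forall S1, S1 \in A -> forall q, q \in S1 -> inR (a+1) j q.
  by move=> S1; rewrite inE => /asBP [[hin _] _].
have hB : forall S2, S2 \in B -> forall q, q \in S2 -> inR (a+j+2) (l-2-j) q.
  by move=> S2; rewrite inE => /asBP; apply: hF.
have -> : [set S | asB (G S /\ pr \in S)] = f @: setX A B.
  apply/setP => S; rewrite inE; apply/idP/idP.
  - move=> /asBP [GS prS].
    have E := decomp hp1 hp2 hj hjl (hG _ GS) prS.
    apply/imsetP; exists (S :&: Rs (a+1) j, S :&: Rs (a+j+2) (l-2-j)) => //.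
    have r1 : forall q, q \in S :&: Rs (a+1) j -> inR (a+1) j q.
      by move=> q; rewrite !inE => /andP[_ /asBP].
    have r2 : forall q, q \in S :&: Rs (a+j+2) (l-2-j) -> inR (a+j+2) (l-2-j) q.
      by move=> q; rewrite !inE => /andP[_ /asBP].
    move: GS; rewrite {1}E => /(hGF _ _ r1 r2) [s1 s2].
    by rewrite inE /A /B !inE; apply/andP; split; apply/asBP.
  - move=> /imsetP [[S1 S2]]; rewrite inE /= => /andP[S1A S2B] ->.
    apply/asBP; split; last by rewrite /f setU11.
    apply/(hGF _ _ (hA _ S1A) (hB _ S2B)); split.
    + by move: S1A; rewrite inE => /asBP.
    + by move: S2B; rewrite inE => /asBP.
apply: card_in_imset => [[S1 S2] [T1 T2]] /setXP[S1A S2B] /setXP[T1A T2B].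
rewrite /f /= => E.
have [e1 e2] := restrict1 hp1 hp2 hjl (hA _ S1A) (hB _ S2B).
have [e1' e2'] := restrict1 hp1 hp2 hjl (hA _ T1A) (hB _ T2B).
have -> : S1 = T1 by rewrite -e1 E e1'.
by have -> : S2 = T2 by rewrite -e2 E e2'.
Qed.


Lemma asB_true (P : Prop) : P -> asB P = true.
Proof. by move=> h; apply/asBP. Qed.
Lemma asB_false (P : Prop) : ~ P -> asB P = false.
Proof. by move=> h; apply/negbTE/negP => /asBP. Qed.
Lemma asB_ext (P Q : Prop) : (P <-> Q) -> asB P = asB Q.
Proof.
move=> h; case: (classic P) => hp.
- by rewrite !asB_true //; apply/h.
- by rewrite !asB_false // => /h.
Qed.
Lemma count_ext (P Q : {set T} -> Prop) : (forall S, P S <-> Q S) -> count P = count Q.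
Proof. by move=> h; rewrite /count; apply: eq_card => S; rewrite !inE; apply: asB_ext. Qed.
Lemma count_sum Q : count Q = \sum_(S : {set T}) (asB (Q S) : nat).
Proof.
rewrite /count -sum1_card big_mkcond /=; apply: eq_bigr => S _.
by rewrite inE; case: asB.
Qed.
Lemma count_false (Q : {set T} -> Prop) : (forall S, ~ Q S) -> count Q = 0.
Proof. by move=> h; rewrite count_sum big1 // => S _; rewrite asB_false. Qed.

Definition pr a j : T := (inord a, inord (a + j + 1)).
Lemma pr1 a j : (a <= n)%coq_nat -> (pr a j).1 = a :> nat.
Proof. by move=> h; rewrite /= inordK //; apply/ltP; nl. Qed.
Lemma pr2 a j : (a + j + 1 <= n)%coq_nat -> (pr a j).2 = a + j + 1 :> nat.
Proof. by move=> h; rewrite /= inordK //; apply/ltP; nl. Qed.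

Lemma secP_sub a l a' l' S : (forall q, q \in S -> inR a' l' q) -> secP a l S -> secP a' l' S.
Proof. by move=> h [_ [h2 h3]]; split. Qed.

Lemma addable_weak a l a' l' S p : addable a' l' S p ->
  (a <= a')%coq_nat -> (a' + l' <= a + l)%coq_nat -> addable a l S p.
Proof. by move=> [hin rest] h1 h2; split => //; move: hin; rewrite /inR; nl. Qed.

Lemma ext_left a l b m S : (a + 1 <= b)%coq_nat -> (b <= a + 2)%coq_nat -> b + m = a + l ->
  Acond b m S -> satP a l S /\ ~ paired S a.
Proof.
move=> hb1 hb2 hbm [[[hin [hnc hd]] hsat] hcov].
split; last first.
  by move=> [q [qS hq]]; have := hin _ qS; rewrite /inR; nl.
split.
  by split => // q qS; have := hin _ qS; rewrite /inR; nl.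
move=> p [hp [np1 [np2 hc]]].
move: hp; rewrite /inR => hp.
have [lt1|ge1] := Nat.lt_ge_cases p.1 b.
- have [q [qS hq]] := hcov p.2 ltac:(nl) ltac:(nl).
  have := hin _ qS; rewrite /inR => hq'.
  have h1 : q.1 <> p.2 :> nat by move=> E; apply: np2; exists q; split => //; left.
  have h2 : q.2 <> p.2 :> nat by move=> E; apply: np2; exists q; split => //; right.
  have [_ ] := hc _ qS; rewrite /cross; nl.
- by apply: (hsat p); split => //; rewrite /inR; nl.
Qed.

Lemma unp_split a l S : (1 <= l)%coq_nat -> (a + l <= n + 1)%coq_nat ->
  satP a l S -> ~ paired S a ->
  Acond (a+1) (l-1) S \/ ((2 <= l)%coq_nat /\ Acond (a+2) (l-2) S).
Proof.
move=> hl hal [[hin [hnc hd]] hsat] np.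
have ha1 : forall q, q \in S -> (a + 1 <= q.1)%coq_nat.
  move=> q qS; have := hin _ qS; rewrite /inR => hq.
  have : q.1 <> a :> nat by move=> E; apply: np; exists q; split => //; left.
  nl.
have hcov : forall x, (a + 2 <= x)%coq_nat -> (x < a + l)%coq_nat -> covered S x.
  move=> x hx1 hx2; case: (classic (covered S x)) => // ncx; exfalso.
  have e1 : (inord a : 'I_n.+1) = a :> nat by rewrite inordK //; apply/ltP; nl.
  have e2 : (inord x : 'I_n.+1) = x :> nat by rewrite inordK //; apply/ltP; nl.
  apply: (hsat (inord a, inord x)); split; first by rewrite /inR /= e1 e2; nl.
  split; first by rewrite /= e1.
  split.
    rewrite /= e2 => [[q [qS hq]]]; apply: ncx; exists q; split => //.
    have := hin _ qS; rewrite /inR; nl.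
  move=> q qS; rewrite /cross /= e1 e2; have := hin _ qS; rewrite /inR => hq.
  split; first nl.
  move=> hc; apply: ncx; exists q; split => //; nl.
case: (classic (covered S (a + 1) \/ l = 1)) => hc.
- left; split; last first.
    move=> x hx1 hx2; have [->|ne] := Nat.eq_dec x (a + 1).
      by case: hc => // E; exfalso; nl.
    by apply: hcov; nl.
  split.
    apply: (secP_sub (a:=a) (l:=l)) => // q qS.
    by have := hin _ qS; have := ha1 _ qS; rewrite /inR; nl.
  by move=> p hp; apply: (hsat p); apply: addable_weak hp _ _; nl.
- right; split; first nl.
  have ha2 : forall q, q \in S -> (a + 2 <= q.1)%coq_nat.
    move=> q qS; have := ha1 _ qS => h.
    have : q.1 <> a + 1 :> nat.
      move=> E; apply: hc; left; exists q; split => //.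
      have := hin _ qS; rewrite /inR; nl.
    nl.
  split; last by move=> x hx1 hx2; apply: hcov; nl.
  split.
    apply: (secP_sub (a:=a) (l:=l)) => // q qS.
    by have := hin _ qS; have := ha2 _ qS; rewrite /inR; nl.
  by move=> p hp; apply: (hsat p); apply: addable_weak hp _ _; nl.
Qed.

Lemma unp_count a l : (1 <= l)%coq_nat -> (a + l <= n + 1)%coq_nat ->
  count (fun S => satP a l S /\ ~ paired S a) =
  count (Acond (a+1) (l-1)) + (if (2 <= l) then count (Acond (a+2) (l-2)) else 0).
Proof.
move=> hl hal.
have -> : (if (2 <= l) then count (Acond (a+2) (l-2)) else 0) =
          count (fun S => (2 <= l)%coq_nat /\ Acond (a+2) (l-2) S).
  case: ifP => /leP h.
  - by apply: count_ext => S; split => // [[]].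
  - by rewrite count_false // => S [].
rewrite !count_sum -big_split /=; apply: eq_bigr => S _.
case: (classic (satP a l S /\ ~ paired S a)) => h.
- rewrite asB_true //.
  case: (unp_split hl hal h.1 h.2) => h'.
  + rewrite (asB_true h') asB_false //.
    move=> [hl2 [[[hin _] _] _]]; have [q [qS hq]] := h'.2 (a+1) ltac:(nl) ltac:(nl).
    have := hin _ qS; rewrite /inR; nl.
  + rewrite (asB_true h') asB_false //.
    move=> [_ hc]; have [q [qS hq]] := hc (a+1) ltac:(nl) ltac:(nl).
    have [[[hin _] _] _] := h'.2; have := hin _ qS; rewrite /inR; nl.
- rewrite asB_false // asB_false; last first.
    by move=> h'; apply: h; apply: (ext_left (b := a+1) (m := l-1)) => //; nl.
  rewrite asB_false //.
  by move=> [hl2 h']; apply: h; apply: (ext_left (b := a+2) (m := l-2)) => //; nl.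
Qed.

Lemma partition a l (Q : {set T} -> Prop) : (1 <= l)%coq_nat -> (a + l <= n + 1)%coq_nat ->
  (forall S, Q S -> secP a l S) ->
  count Q = count (fun S => Q S /\ ~ paired S a) +
            \sum_(j < l.-1) count (fun S => Q S /\ pr a j \in S).
Proof.
move=> hl hal hQ.
rewrite count_sum.
under [X in _ = _ + X]eq_bigr do rewrite count_sum.
rewrite exchange_big /= count_sum -big_split /=; apply: eq_bigr => S _.
case: (classic (Q S)) => qs; last first.
  rewrite asB_false // asB_false; last by case.
  by rewrite big1 // => j _; rewrite asB_false // => [[]].
have [hin [hnc hd]] := hQ _ qs.
rewrite asB_true //.
case: (classic (paired S a)) => hp.
- rewrite asB_false; last by case.
  have [q [qS hq]] := hp.
  have := hin _ qS; rewrite /inR => hq'.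
  have q1 : q.1 = a :> nat by nl.
  have hj0 : (q.2 - a - 1 < l.-1)%nat by apply/ltP; nl.
  rewrite (bigD1 (Ordinal hj0)) //= big1.
    rewrite asB_true //; split => //.
    have -> : pr a (q.2 - a - 1) = q.
      rewrite [RHS]surjective_pairing /pr; congr pair; apply/val_inj; rewrite /= inordK; try (apply/ltP); nl.
    by [].
  move=> j hj; rewrite asB_false // => [[_ prS]].
  have hjl : (j < l - 1)%coq_nat by apply/ltP; rewrite subn1; exact: ltn_ord.
  have hq1 := pr1 j (ltac:(nl) : (a <= n)%coq_nat).
  have hq2 := pr2 (ltac:(nl) : (a + j + 1 <= n)%coq_nat).
  have ne : pr a j <> q.
    move=> E; move: hj => /eqP; apply; apply: val_inj => /=.
    move: hq2; rewrite E; nl.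
  have := hd _ _ prS qS ne; rewrite hq1; nl.
- rewrite asB_true // big1 // => j _; rewrite asB_false // => [[_ prS]].
  apply: hp; exists (pr a j); split => //; left; apply: pr1; nl.
Qed.


Definition Cn a l := count (satP a l).
Definition An a l := count (Acond a l).

Lemma count_empty (Q : {set T} -> Prop) : (forall S, Q S <-> S = set0) -> count Q = 1.
Proof.
move=> h; rewrite /count -(cards1 (set0 : {set T})); apply: eq_card => S.
rewrite !inE; apply/idP/idP.
- by move/asBP/h => ->.
- by move/eqP => E; apply/asBP/h.
Qed.

Lemma sat0 a S : satP a 0 S <-> S = set0.
Proof.
split.
- move=> [[hin _] _]; apply/setP => q; rewrite inE.
  by apply/negbTE/negP => /hin; rewrite /inR; nl.
- move=> ->; split; first by split; [|split] => p; rewrite inE.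
  by move=> p [hp _]; move: hp; rewrite /inR; nl.
Qed.

Lemma C0 a : Cn a 0 = 1.
Proof. by apply: count_empty => S; apply: sat0. Qed.
Lemma A0 a : An a 0 = 1.
Proof.
apply: count_empty => S; split; first by move=> [/sat0].
move=> E; split; first by apply/sat0.
by move=> x; nl.
Qed.

Lemma piece0 a l (Q : {set T} -> Prop) : (2 <= l)%coq_nat -> (a + l <= n + 1)%coq_nat ->
  (forall S, Q S -> secP a l S) -> count (fun S => Q S /\ pr a 0 \in S) = 0.
Proof.
move=> hl hal hQ; apply: count_false => S [/hQ [hin _] prS].
have := hin _ prS; rewrite /inR pr1 ?pr2; nl.
Qed.

Lemma Crec a l : (1 <= l)%coq_nat -> (a + l <= n + 1)%coq_nat ->
  Cn a l = An (a+1) (l-1) + (if (2 <= l) then An (a+2) (l-2) else 0) +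
    \sum_(j < l.-1) (if (j : nat) == 0 then 0 else Cn (a+1) j * Cn (a + j + 2) (l - 2 - j)).
Proof.
move=> hl hal.
have hQ : forall S, satP a l S -> secP a l S by move=> S [].
rewrite /Cn (partition hl hal hQ) unp_count //; congr (_ + _).
apply: eq_bigr => j _.
have hjl : (j < l - 1)%coq_nat by apply/ltP; rewrite subn1; exact: ltn_ord.
case: eqP => [j0|jn0].
- rewrite j0; apply: (piece0 _ _ hQ); nl.
- apply: (count_split (a:=a) (l:=l)) => //.
  + apply: pr1; nl.
  + apply: pr2; nl.
  + nl.
  + nl.
  + move=> S1 S2 h1 h2; apply: union_sat => //; [apply: pr1; nl|apply: pr2; nl|nl|nl].
  + by move=> S2 [[hin _] _].
Qed.

Lemma Arec a l : (1 <= l)%coq_nat -> (a + l <= n + 1)%coq_nat ->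
  An a l = \sum_(j < l.-1) (if (j : nat) == 0 then 0 else Cn (a+1) j * An (a + j + 2) (l - 2 - j)).
Proof.
move=> hl hal.
have hQ : forall S, Acond a l S -> secP a l S by move=> S [[]].
rewrite /An (partition hl hal hQ) count_false ?add0n.
  apply: eq_bigr => j _.
  have hjl : (j < l - 1)%coq_nat by apply/ltP; rewrite subn1; exact: ltn_ord.
  case: eqP => [j0|jn0].
  - rewrite j0; apply: (piece0 _ _ hQ); nl.
  - apply: (count_split (a:=a) (l:=l)) => //.
    + apply: pr1; nl.
    + apply: pr2; nl.
    + nl.
    + nl.
    + move=> S1 S2 h1 h2; apply: union_A => //; [apply: pr1; nl|apply: pr2; nl|nl|nl].
    + by move=> S2 [[[hin _] _] _].
move=> S [[[[hin _] _] hc] np].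
have [q [qS hq]] := hc a ltac:(nl) ltac:(nl).
apply: np; exists q; split => //; left; have := hin _ qS; rewrite /inR; nl.
Qed.

End Comb.

Lemma invariance l : forall n m a b, (a + l <= n + 1)%coq_nat -> (b + l <= m + 1)%coq_nat ->
  Cn n a l = Cn m b l /\ An n a l = An m b l.
Proof.
induction l as [l IH] using lt_wf_ind => n m a b ha hb.
case: l IH ha hb => [|l] IH ha hb.
  by rewrite !C0 !A0.
have IHC : forall k a' b', (k < l.+1)%coq_nat -> (a' + k <= n + 1)%coq_nat ->
   (b' + k <= m + 1)%coq_nat -> Cn n a' k = Cn m b' k.
  by move=> k a' b' h1 h2 h3; case: (IH k h1 n m a' b' h2 h3).
have IHA : forall k a' b', (k < l.+1)%coq_nat -> (a' + k <= n + 1)%coq_nat ->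
   (b' + k <= m + 1)%coq_nat -> An n a' k = An m b' k.
  by move=> k a' b' h1 h2 h3; case: (IH k h1 n m a' b' h2 h3).
have hl : (1 <= l.+1)%coq_nat by nl.
have hsum : forall (F : nat -> nat -> nat -> nat),
   (forall j, (j < l)%coq_nat -> F n (a + j + 2) (l.+1 - 2 - j) = F m (b + j + 2) (l.+1 - 2 - j)) ->
   \sum_(j < l.+1.-1) (if (j : nat) == 0 then 0 else Cn n (a+1) j * F n (a + j + 2) (l.+1 - 2 - j)) =
   \sum_(j < l.+1.-1) (if (j : nat) == 0 then 0 else Cn m (b+1) j * F m (b + j + 2) (l.+1 - 2 - j)).
  move=> F hFG; apply: eq_bigr => j _; case: eqP => // _.
  have hj : (j < l)%coq_nat by apply/ltP; exact: ltn_ord.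
  rewrite hFG //; congr (_ * _); apply: IHC; nl.
split.
- rewrite (Crec hl ha) (Crec hl hb).
  congr (_ + _ + _).
  + apply: IHA; nl.
  + case: ifP => // /leP h2; apply: IHA; nl.
  + apply: (hsum (fun n a l => Cn n a l)) => j hj; apply: IHC; nl.
- rewrite (Arec hl ha) (Arec hl hb).
  apply: (hsum (fun n a l => An n a l)) => j hj; apply: IHA; nl.
Qed.

Lemma secondary_iff n (S : {set 'I_n.+1 * 'I_n.+1}) : secondary S <-> secP 1 n S.
Proof.
have ne_nat : forall (x y : 'I_n.+1), x != y -> x <> y :> nat.
  by move=> x y /eqP ne E; apply: ne; apply: val_inj.
have nat_ne : forall (x y : 'I_n.+1), x <> y :> nat -> x != y.
  by move=> x y ne; apply/eqP => E; apply: ne; rewrite E.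
rewrite /secondary; split.
- case/and4P => /forall_inP h1 /forall_inP h2 /forall_inP h3 /forall_inP h4.
  split; [|split].
  + move=> [x y] pS; move: (h1 _ pS) (h4 _ pS); rewrite /pos_pair /= => /andP[/leP e1 /ltP e2] /ltP e3.
    have := ltn_ord y; move/ltP => e4; rewrite /inR /=; nl.
  + move=> p q pS qS; move: (h2 _ pS) => /forall_inP /(_ _ qS) /negP hh.
    rewrite /cross => [[? [? ?]]]; apply: hh; apply/and3P; split; apply/ltP; assumption.
  + move=> p q pS qS pq; move: (h3 _ pS) => /forall_inP /(_ _ qS) /implyP.
    have pq' : p != q by apply/eqP.
    move=> /(_ pq') /and4P [e1 e2 e3 e4].
    by split; [|split; [|split]]; apply: ne_nat.
- move=> [h1 [h2 h3]].
  apply/and4P; split; apply/forall_inP => [[x y]] pS.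
  + have := h1 _ pS; rewrite /inR /pos_pair /= => [[e1 [e2 e3]]].
    by apply/andP; split; apply/ltP; nl.
  + apply/forall_inP => q qS; apply/negP => /and3P [/ltP ? /ltP ? /ltP ?].
    by apply: (h2 _ _ pS qS); rewrite /cross.
  + apply/forall_inP => q qS; apply/implyP => /eqP pq.
    have [? [? [? ?]]] := h3 _ _ pS qS pq.
    by apply/and4P; split; apply: nat_ne.
  + have := h1 _ pS; rewrite /inR /= => [[e1 [e2 e3]]]; apply/ltP; nl.
Qed.

Lemma saturated_iff n (S : {set 'I_n.+1 * 'I_n.+1}) : saturated S <-> satP 1 n S.
Proof.
rewrite /saturated; split.
- case/andP => /secondary_iff hs /forallP hf; split => // p hp.
  have [pS hs'] := (addable_sec p hs).2 hp.
  have /implyP H := hf p.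
  have : ~~ secondary (p |: S).
    apply: H; rewrite pS /=; have := hp.1; rewrite /inR /pos_pair => [[e1 [e2 e3]]].
    by apply/andP; split; apply/leP; nl.
  by move/negP; apply; apply/secondary_iff.
- move=> [hs hsat]; apply/andP; split; first by apply/secondary_iff.
  apply/forallP => p; apply/implyP => /andP [pS _]; apply/negP => /secondary_iff hs'.
  by apply: (hsat p); apply/(addable_sec p hs).
Qed.

Definition sv l := Cn l 1 l.
Definition av l := An l 1 l.

Lemma sat_count_sv l : sat_count l = sv l.
Proof.
rewrite /sat_count /sv /Cn /count; apply: eq_card => S; rewrite !inE.
apply/idP/idP => [/saturated_iff h|/asBP /saturated_iff //]; by apply/asBP.
Qed.

Lemma sv0 : sv 0 = 1. Proof. exact: C0. Qed.
Lemma av0 : av 0 = 1. Proof. exact: A0. Qed.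

Lemma sv_rec l : (1 <= l)%coq_nat ->
  sv l = av (l-1) + (if (2 <= l) then av (l-2) else 0) +
    \sum_(j < l.-1) (if (j : nat) == 0 then 0 else sv j * sv (l - 2 - j)).
Proof.
move=> hl; rewrite /sv (Crec hl (ltac:(nl) : (1 + l <= l + 1)%coq_nat)).
congr (_ + _ + _).
- by case: (invariance (n := l) (m := l - 1) (a := 1+1) (b := 1) (l := l - 1)) => //; nl.
- case: ifP => // /leP h2.
  by case: (invariance (n := l) (m := l - 2) (a := 1+2) (b := 1) (l := l - 2)) => //; nl.
- apply: eq_bigr => j _; case: eqP => // _.
  have hj : (j < l - 1)%coq_nat by apply/ltP; rewrite subn1; exact: ltn_ord.
  congr (_ * _).
  + by case: (invariance (n := l) (m := j) (a := 1+1) (b := 1) (l := j)) => //; nl.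
  + by case: (invariance (n := l) (m := l - 2 - j) (a := 1+j+2) (b := 1) (l := l - 2 - j)) => //; nl.
Qed.

Lemma av_rec l : (1 <= l)%coq_nat ->
  av l = \sum_(j < l.-1) (if (j : nat) == 0 then 0 else sv j * av (l - 2 - j)).
Proof.
move=> hl; rewrite /av (Arec hl (ltac:(nl) : (1 + l <= l + 1)%coq_nat)).
apply: eq_bigr => j _; case: eqP => // _.
have hj : (j < l - 1)%coq_nat by apply/ltP; rewrite subn1; exact: ltn_ord.
congr (_ * _).
+ by case: (invariance (n := l) (m := j) (a := 1+1) (b := 1) (l := j)) => //; nl.
+ by case: (invariance (n := l) (m := l - 2 - j) (a := 1+j+2) (b := 1) (l := l - 2 - j)) => //; nl.
Qed.

Import GRing.Theory.

Local Open Scope ring_scope.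

Section Ident.
Variable R : comNzRingType.
Definition pl (x y : R) : R := x + y.
Definition ml (x y : R) : R := x * y.
Definition ng (x : R) : R := - x.
Definition sb (x y : R) : R := x - y.
Definition z0 : R := 0.
Definition o1 : R := 1.
Definition R_rt : @ring_theory R z0 o1 pl ml sb ng eq.
Proof.
split; rewrite /pl /ml /ng /sb /z0 /o1.
- exact: add0r.
- exact: addrC.
- exact: addrA.
- exact: mul1r.
- exact: mulrC.
- exact: mulrA.
- exact: mulrDl.
- by [].
- exact: subrr.
Qed.
Add Ring RRing : R_rt.

Lemma plE (x y : R) : x + y = pl x y. Proof. by []. Qed.
Lemma mlE (x y : R) : x * y = ml x y. Proof. by []. Qed.
Lemma ngE (x : R) : - x = ng x. Proof. by []. Qed.
Lemma z0E : 0 = z0 :> R. Proof. by []. Qed.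
Lemma o1E : 1 = o1 :> R. Proof. by []. Qed.

Lemma ident (S G X : R) :
  - S ^+ 3 * X ^+ 4 + X * (1 + X) - S ^+ 2 * X ^+ 2 * (X ^+ 2 - 2%:R) + S * (X ^+ 2 - 1) =
  - ((S - (X ^+ 2 * S * (1 + S) + (X + X ^+ 2) * G)) * (1 - X ^+ 2 * S) +
     (X + X ^+ 2) * (G - (1 + X ^+ 2 * S * G))).
Proof.
rewrite mulr2n !exprS !expr0 !plE !mlE !ngE !o1E.
match goal with |- @eq _ ?x ?y => change (@eq R x y) end.
ring.
Qed.
End Ident.

Lemma alg_ident (S G : {poly int}) : alg_lhs S = - ((S - ('X^2 * S * (1 + S) + ('X + 'X^2) * G)) * (1 - 'X^2 * S) + ('X + 'X^2) * (G - (1 + 'X^2 * S * G))).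
Proof. exact: ident. Qed.
Import GRing.Theory.
Local Open Scope ring_scope.

Lemma coef_sumX (c : nat -> int) m M k :
  (\sum_(m <= i < M) c i *: 'X^i)`_k = if (m <= k < M)%nat then c k else 0.
Proof.
elim: M => [|M IH].
  by rewrite big_geq // coef0; case: ifP => // /andP[_].
case: (leqP m M) => hm.
  rewrite big_nat_recr //= coefD IH coefZ coefXn.
  case: (ltngtP k M) => [lt|gt|->].
  - by rewrite ltnS (ltnW lt) mulr0 addr0.
  - by rewrite ltnS (leqNgt k M) gt andbF mulr0 addr0.
  - by rewrite andbF ltnS leqnn andbT hm mulr1 add0r.
rewrite big_geq // coef0; case: ifP => // /andP[h1 h2].
have := leq_trans h1 h2 => h.
by move: (leq_ltn_trans h hm); rewrite ltnn.
Qed.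

Definition Gp N : {poly int} := \sum_(0 <= i < N.+1) (av i)%:R *: 'X^i.

Lemma Sp_coef N k : (S_trunc N)`_k = if (1 <= k <= N)%nat then (sv k)%:R else 0.
Proof.
rewrite /S_trunc (eq_bigr (fun i => (sv i)%:R *: 'X^i)); last by move=> i _; rewrite sat_count_sv.
by rewrite coef_sumX ltnS.
Qed.

Lemma Gp_coef N k : (Gp N)`_k = if (k <= N)%nat then (av k)%:R else 0.
Proof. by rewrite /Gp coef_sumX ltnS. Qed.

Lemma mul0N N (p q : {poly int}) : (forall k, (k <= N)%nat -> p`_k = 0) ->
  forall k, (k <= N)%nat -> (p * q)`_k = 0.
Proof.
move=> h k hk; rewrite coefM big1 // => j _.
rewrite h ?mul0r //; apply: leq_trans hk; rewrite -ltnS; exact: ltn_ord.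
Qed.

Lemma convS (F : {poly int}) (f : nat -> nat) N m : (m.+2 <= N)%nat ->
  (forall i, (i <= m)%nat -> F`_i = (f i)%:R) ->
  (S_trunc N * F)`_m = (\sum_(j < m.+1) (if (j : nat) == 0%nat then 0%nat else (sv j * f (m - j))%nat))%:R.
Proof.
move=> hm hF; rewrite coefM natr_sum; apply: eq_bigr => j _.
have hj : (j <= m)%nat by rewrite -ltnS.
rewrite Sp_coef hF ?leq_subr //.
case: eqP => [->|/eqP j0] /=; first by rewrite mul0r.
rewrite lt0n j0 /= (leq_trans hj) ?natrM //.
by apply: (leq_trans _ hm); apply: leqW; apply: leqW.
Qed.

Lemma sub2 m : (m.+2 - 2 = m)%nat. Proof. by rewrite subSS subSS subn0. Qed.

Lemma D2_0 N k : (k <= N)%nat -> (Gp N - (1 + 'X^2 * S_trunc N * Gp N))`_k = 0.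
Proof.
move=> hk; rewrite coefB coefD coef1 -mulrA coefXnM Gp_coef hk.
case: k hk => [|[|m]] hk /=.
- by rewrite av0 subrr.
- by rewrite (av_rec (ltac:(auto) : (1 <= 1)%coq_nat)) big_ord0 addr0.
- rewrite (av_rec (ltac:(apply/leP; done) : (1 <= m.+2)%coq_nat)) sub2 add0r.
  rewrite (@convS _ av) //; first by rewrite subrr.
  by move=> i hi; rewrite Gp_coef (leq_trans hi) //; apply: leq_trans hk; apply: leqW; apply: leqW.
Qed.

Lemma D1_0 N k : (k <= N)%nat ->
  (S_trunc N - ('X^2 * S_trunc N * (1 + S_trunc N) + ('X + 'X^2) * Gp N))`_k = 0.
Proof.
move=> hk; rewrite coefB coefD -mulrA coefXnM mulrDl coefD coefXM coefXnM Sp_coef.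
case: k hk => [|[|m]] hk /=.
- by rewrite subr0.
- rewrite hk Gp_coef /= subr0 add0r (sv_rec (ltac:(auto) : (1 <= 1)%coq_nat)) big_ord0 /=.
  by rewrite subnn !addn0 subrr.
- case E: (m.+2 <= N)%nat; last by rewrite E in hk.
  rewrite (sv_rec (ltac:(apply/leP; done) : (1 <= m.+2)%coq_nat)) /= sub2 subSS subn0.
  have h1 : (m < N)%nat by apply: leq_trans hk; apply: leqW.
  have h2 : (m <= N)%nat by apply: ltnW.
  rewrite !Gp_coef h1 h2 (@convS _ sv) //.
    by rewrite !natrD; apply/eqP; rewrite subr_eq0; apply/eqP; rewrite addrC.
  move=> i hi; rewrite coefD coef1 Sp_coef.
  case: i hi => [|i] hi /=; first by rewrite sv0 addr0.
  by rewrite add0r (leq_trans hi) //; apply: leq_trans hk; apply: leqW; apply: leqW.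
Qed.

Delimit Scope nat_scope with N.
Theorem mainTheorem5 :
  forall N k : nat, (k <= N)%N -> (nth 0%R (alg_lhs (S_trunc N)) k) = 0%R.
Proof.
move=> N k hk.
rewrite (alg_ident _ (Gp N)) coefN coefD (mul0N _ (@D1_0 N)) // mulrC (mul0N _ (@D2_0 N)) //.
Qed.
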